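(* Consider the random graph mixture model with $\kappa$-state edge variables and $Q\ge 2$ groups. If $\kappa\ge\binom{Q+1}2$ and the $\kappa$-entry vectors $\{\mathbf p_{ql}\}_{1\le q\le l\le Q}$ are linearly independent, then the parameters $\boldsymbol\pi$ and $\{\mathbf p_{ql}\}_{1\le q\le l\le Q}$ are identifiable, up to label swapping, from the joint distribution of $K_9$.
   Context: Random graph mixture model: nodes have i.i.d. latent groups $Z_i\in\{1,\dots,Q\}$ with $\pi_q=\mathbb P(Z_i=q)\in(0,1)$, $\sum_q\pi_q=1$; edge variables $X_{ij}$ ($i<j$) are conditionally independent given all $Z$'s, with law of $X_{ij}$ depending only on $(Z_i,Z_j)$. In the $\kappa$-state model, $X_{ij}\in\{1,\dots,\kappa\}$ and $\mathbf p_{ql}=(p_{ql}(1),\dots,p_{ql}(\kappa))$ with $p_{ql}(k)=\mathbb P(X_{ij}=k\mid Z_i=q,Z_j=l)$, $\sum_kp_{ql}(k)=1$, and $\mathbf p_{ql}=\mathbf p_{lq}$. $K_n$ denotes the collection of the $\binom n2$ edge variables among $n$ nodes. ''Up to label swapping'' means up to a permutation of $\{1,\dots,Q\}$ applied simultaneously to all group-indexed parameters. *)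

(* Defs.v *)
From HB Require Import structures.
From mathcomp Require Import all_boot all_order all_algebra all_fingroup.
Set Implicit Arguments. Unset Strict Implicit. Unset Printing Implicit Defensive.
Import Order.TTheory GRing.Theory Num.Theory.
Local Open Scope ring_scope.

(* Parameters of the kappa-state random graph mixture model with Q groups:
   pi q = P(Z_i = q), p q l k = P(X_ij = k | Z_i = q, Z_j = l). *)
Definition model_params (R : realFieldType) (Q kappa : nat)
    (pi : 'I_Q -> R) (p : 'I_Q -> 'I_Q -> 'I_kappa -> R) : Prop :=
  [/\ (forall q, 0 < pi q /\ pi q < 1),
      \sum_(q < Q) pi q = 1,
      (forall q l k, 0 <= p q l k),
      (forall q l, \sum_(k < kappa) p q l k = 1)
    & (forall q l, p q l = p l q)].

Definition lin_indep_pql (R : realFieldType) (Q kappa : nat)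
    (p : 'I_Q -> 'I_Q -> 'I_kappa -> R) : Prop :=
  forall c : 'I_Q -> 'I_Q -> R,
    (forall k : 'I_kappa,
        \sum_(q < Q) \sum_(l < Q | (q <= l)%N) c q l * p q l k = 0) ->
    forall q l : 'I_Q, (q <= l)%N -> c q l = 0.

(* Joint distribution of K_n: probability that X_ij = x i j for all i < j
   (entries x i j with i >= j are ignored). *)
Definition joint_dist (R : realFieldType) (Q kappa n : nat)
    (pi : 'I_Q -> R) (p : 'I_Q -> 'I_Q -> 'I_kappa -> R)
    (x : 'I_n -> 'I_n -> 'I_kappa) : R :=
  \sum_(z : {ffun 'I_n -> 'I_Q})
     ((\prod_(i < n) pi (z i)) *
      \prod_(i < n) \prod_(j < n | (i < j)%N) p (z i) (z j) (x i j)).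

(* Main.v *)
Require Import Defs.
From Stdlib Require Import FunctionalExtensionality.
From HB Require Import structures.
From mathcomp Require Import all_boot all_order all_algebra all_fingroup.
Set Implicit Arguments. Unset Strict Implicit. Unset Printing Implicit Defensive.
Import Order.TTheory GRing.Theory Num.Theory.
Local Open Scope ring_scope.

Definition dotp (R : realFieldType) (K : nat) (f h : 'I_K -> R) : R := \sum_k f k * h k.
Definition vv (R : realFieldType) (Q K : nat) (pi : 'I_Q -> R) (p : 'I_Q -> 'I_Q -> 'I_K -> R)
  (q : 'I_Q) (k : 'I_K) : R := \sum_r pi r * p q r k.

Definition n0 : 'I_9 := @Ordinal 9 0 isT.
Definition n1 : 'I_9 := @Ordinal 9 1 isT.
Definition n2 : 'I_9 := @Ordinal 9 2 isT.
Definition n3 : 'I_9 := @Ordinal 9 3 isT.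
Definition n4 : 'I_9 := @Ordinal 9 4 isT.

Definition Hh (R : realFieldType) (K : nat) (h1 h2 h3 h4 : 'I_K -> R) (pr : 'I_9 * 'I_9) : 'I_K -> R :=
  if pr == (n0, n1) then h1 else if pr == (n0, n2) then h2 else
  if pr == (n0, n3) then h3 else if pr == (n1, n4) then h4 else (fun _ => 1).

Definition Hf (R : realFieldType) (K : nat) (k0 : 'I_K) (h1 h2 h3 h4 : 'I_K -> R)
  (pr : 'I_9 * 'I_9) (k : 'I_K) : R :=
  if (pr.1 < pr.2)%N then Hh h1 h2 h3 h4 pr k else (k == k0)%:R.

Definition Mst (R : realFieldType) (Q K : nat) (pi : 'I_Q -> R) (p : 'I_Q -> 'I_Q -> 'I_K -> R)
  (h1 h2 h3 h4 : 'I_K -> R) : R :=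
  \sum_q \sum_l pi q * (pi l * dotp (p q l) h1 *
     (dotp (vv pi p q) h2 * (dotp (vv pi p q) h3 * dotp (vv pi p l) h4))).

Lemma prod_supp (R : realFieldType) (T : finType) (s : seq T) (F : T -> R) :
  uniq s -> (forall t, t \notin s -> F t = 1) -> \prod_t F t = \prod_(t <- s) F t.
Proof.
move=> Us H1; rewrite (big_uniq _ Us) (bigID (mem s)) /=.
by rewrite [X in _ * X]big1 ?mulr1 // => t /H1.
Qed.

Lemma sum_only (R : realFieldType) (T : finType) (F : T -> R) t :
  (forall q, q != t -> F q = 0) -> \sum_q F q = F t.
Proof.
by move=> H; rewrite (bigD1 t) //= big1 ?addr0 // => q /H.
Qed.

Lemma dot1 (R : realFieldType) Q K (pi : 'I_Q -> R) p q l :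
  model_params pi p -> dotp (p q l) (fun _ : 'I_K => 1) = 1.
Proof.
case=> _ _ _ H _; rewrite /dotp -[RHS](H q l); apply eq_bigr => k _; exact: mulr1.
Qed.

Lemma sum_pi_dot (R : realFieldType) Q K (pi : 'I_Q -> R) (p : 'I_Q -> 'I_Q -> 'I_K -> R) q h :
  \sum_l pi l * dotp (p q l) h = dotp (vv pi p q) h.
Proof.
rewrite /dotp /vv; under eq_bigr do rewrite mulr_sumr.
rewrite exchange_big /=; apply eq_bigr => k _; rewrite mulr_suml.
by apply eq_bigr => l _; rewrite mulrA.
Qed.

Lemma jd_pair (R : realFieldType) Q K (pi : 'I_Q -> R) p (x : 'I_9 -> 'I_9 -> 'I_K) :
  joint_dist pi p x = \sum_(z : {ffun 'I_9 -> 'I_Q}) (\prod_i pi (z i)) *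
     \prod_(pr : 'I_9 * 'I_9) (if (pr.1 < pr.2)%N then p (z pr.1) (z pr.2) (x pr.1 pr.2) else 1).
Proof.
rewrite /joint_dist; apply eq_bigr => z _; congr (_ * _).
under eq_bigr do rewrite big_mkcond /=.
by rewrite pair_bigA.
Qed.

Lemma jd_pairy (R : realFieldType) Q K (pi : 'I_Q -> R) p (y : {ffun 'I_9 * 'I_9 -> 'I_K}) :
  joint_dist pi p (fun i j => y (i, j)) = \sum_(z : {ffun 'I_9 -> 'I_Q}) (\prod_i pi (z i)) *
     \prod_(pr : 'I_9 * 'I_9) (if (pr.1 < pr.2)%N then p (z pr.1) (z pr.2) (y pr) else 1).
Proof.
rewrite jd_pair; apply eq_bigr => z _; congr (_ * _); by apply eq_bigr => -[i j] _.
Qed.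

Lemma master_x (R : realFieldType) Q K (pi : 'I_Q -> R) p (k0 : 'I_K) h1 h2 h3 h4 :
  \sum_(y : {ffun 'I_9 * 'I_9 -> 'I_K})
     joint_dist pi p (fun i j => y (i, j)) * \prod_pr Hf k0 h1 h2 h3 h4 pr (y pr)
  = \sum_(z : {ffun 'I_9 -> 'I_Q}) (\prod_i pi (z i)) *
     \prod_(pr : 'I_9 * 'I_9) (if (pr.1 < pr.2)%N
         then dotp (p (z pr.1) (z pr.2)) (Hh h1 h2 h3 h4 pr) else 1).
Proof.
under eq_bigr => y _ do rewrite jd_pairy mulr_suml.
rewrite exchange_big /=; apply eq_bigr => z _.
under eq_bigr => y _ do rewrite -mulrA -big_split /=.
rewrite -mulr_sumr; congr (_ * _).
rewrite -(bigA_distr_bigA (fun (pr : 'I_9 * 'I_9) (k : 'I_K) =>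
  (if (pr.1 < pr.2)%N then p (z pr.1) (z pr.2) k else 1) * Hf k0 h1 h2 h3 h4 pr k)) /=.
apply eq_bigr => pr _.
rewrite /Hf; case: ifP => _.
  by rewrite /dotp.
rewrite (@sum_only _ _ _ k0) ?eqxx ?mul1r // => k kk; by rewrite (negbTE kk) mulr0.
Qed.

Lemma prod_E (R : realFieldType) Q K (pi : 'I_Q -> R) p (z : {ffun 'I_9 -> 'I_Q}) (h1 h2 h3 h4 : 'I_K -> R) :
  model_params pi p ->
  \prod_(pr : 'I_9 * 'I_9) (if (pr.1 < pr.2)%N
         then dotp (p (z pr.1) (z pr.2)) (Hh h1 h2 h3 h4 pr) else 1)
  = dotp (p (z n0) (z n1)) h1 * (dotp (p (z n0) (z n2)) h2 *
     (dotp (p (z n0) (z n3)) h3 * dotp (p (z n1) (z n4)) h4)).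
Proof.
move=> Hm.
rewrite (@prod_supp _ _ [:: (n0, n1); (n0, n2); (n0, n3); (n1, n4)]) //.
  by rewrite !big_cons big_nil mulr1.
move=> t; rewrite !inE !negb_or => /andP[a /andP[b /andP[c d]]].
rewrite /Hh (negbTE a) (negbTE b) (negbTE c) (negbTE d).
by case: ifP => // _; rewrite (dot1 _ _ Hm).
Qed.

Lemma cond2 (R : realFieldType) Q (X : {ffun 'I_9 -> 'I_Q} -> R) :
  \sum_(z : {ffun 'I_9 -> 'I_Q}) X z = \sum_(q : 'I_Q) \sum_(l : 'I_Q) \sum_(z : {ffun 'I_9 -> 'I_Q}) ((z n0 == q)%:R * ((z n1 == l)%:R * X z)).
Proof.
symmetry; under eq_bigr => q _ do rewrite exchange_big.
rewrite exchange_big; apply eq_bigr => z _.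
rewrite (@sum_only _ _ _ (z n0)); last first.
  by move=> q qn; apply big1 => l _; rewrite eq_sym (negbTE qn) mul0r.
rewrite (@sum_only _ _ _ (z n1)); last first.
  by move=> l ln; rewrite eq_sym (negbTE ln) mul0r mulr0.
by rewrite !eqxx !mul1r.
Qed.

Definition gg (R : realFieldType) Q K (p : 'I_Q -> 'I_Q -> 'I_K -> R) (h1 h2 h3 h4 : 'I_K -> R)
   (q l : 'I_Q) (i : 'I_9) (r : 'I_Q) : R :=
  if i == n0 then (r == q)%:R else if i == n1 then (r == l)%:R * dotp (p q r) h1
  else if i == n2 then dotp (p q r) h2 else if i == n3 then dotp (p q r) h3
  else if i == n4 then dotp (p l r) h4 else 1.

Lemma cond_term (R : realFieldType) Q K (pi : 'I_Q -> R) p (h1 h2 h3 h4 : 'I_K -> R) q l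
   (z : {ffun 'I_9 -> 'I_Q}) :
  (z n0 == q)%:R * ((z n1 == l)%:R * ((\prod_i pi (z i)) *
     (dotp (p (z n0) (z n1)) h1 * (dotp (p (z n0) (z n2)) h2 *
     (dotp (p (z n0) (z n3)) h3 * dotp (p (z n1) (z n4)) h4)))))
  = \prod_i (pi (z i) * gg p h1 h2 h3 h4 q l i (z i)).
Proof.
rewrite big_split /=.
rewrite (@prod_supp _ _ [:: n0; n1; n2; n3; n4] (fun i => gg p h1 h2 h3 h4 q l i (z i))) //; last first.
  move=> t; rewrite !inE !negb_or => /andP[a /andP[b /andP[c /andP[d e]]]].
  by rewrite /gg (negbTE a) (negbTE b) (negbTE c) (negbTE d) (negbTE e).
rewrite !big_cons big_nil /gg /= mulr1.
case: eqP => [<-|_]; last by rewrite !mul0r mulr0.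
case: eqP => [<-|_]; last by rewrite !mul0r !mulr0.
by rewrite !mul1r.
Qed.

Lemma sum_del (R : realFieldType) Q (f : 'I_Q -> R) q : \sum_r f r * (r == q)%:R = f q.
Proof. by rewrite (@sum_only _ _ _ q) ?eqxx ?mulr1 // => r /negbTE ->; rewrite mulr0. Qed.

Lemma sum_del2 (R : realFieldType) Q (f c : 'I_Q -> R) q : \sum_r f r * ((r == q)%:R * c r) = f q * c q.
Proof. by rewrite (@sum_only _ _ _ q) ?eqxx ?mul1r // => r /negbTE ->; rewrite mul0r mulr0. Qed.

Lemma master_z (R : realFieldType) Q K (pi : 'I_Q -> R) p (h1 h2 h3 h4 : 'I_K -> R) :
  model_params pi p ->
  \sum_(z : {ffun 'I_9 -> 'I_Q}) (\prod_i pi (z i)) *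
     (dotp (p (z n0) (z n1)) h1 * (dotp (p (z n0) (z n2)) h2 *
     (dotp (p (z n0) (z n3)) h3 * dotp (p (z n1) (z n4)) h4)))
  = Mst pi p h1 h2 h3 h4.
Proof.
move=> Hm; rewrite cond2 /Mst; apply eq_bigr => q _; apply eq_bigr => l _.
under eq_bigr => z _ do rewrite cond_term.
rewrite -(bigA_distr_bigA (fun i r => pi r * gg p h1 h2 h3 h4 q l i r)) /=.
rewrite (@prod_supp _ _ [:: n0; n1; n2; n3; n4]) //; last first.
  move=> t; rewrite !inE !negb_or => /andP[a /andP[b /andP[c /andP[d e]]]].
  rewrite /gg (negbTE a) (negbTE b) (negbTE c) (negbTE d) (negbTE e).
  case: Hm => _ H _ _ _; rewrite -[RHS]H; apply eq_bigr => r _; exact: mulr1.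
rewrite !big_cons big_nil /gg /= sum_del sum_del2 !sum_pi_dot mulr1.
by [].
Qed.

Lemma master (R : realFieldType) Q K (pi : 'I_Q -> R) p (k0 : 'I_K) h1 h2 h3 h4 :
  model_params pi p ->
  \sum_(y : {ffun 'I_9 * 'I_9 -> 'I_K})
     joint_dist pi p (fun i j => y (i, j)) * \prod_pr Hf k0 h1 h2 h3 h4 pr (y pr)
  = Mst pi p h1 h2 h3 h4.
Proof.
move=> Hm; rewrite master_x.
under eq_bigr => z _ do rewrite (prod_E _ _ _ _ _ Hm).
exact: master_z.
Qed.

Lemma sum_v (R : realFieldType) Q K (pi : 'I_Q -> R) (p : 'I_Q -> 'I_Q -> 'I_K -> R) q :
  model_params pi p -> \sum_k vv pi p q k = 1.
Proof.
case=> _ Hs _ H1 _; rewrite /vv exchange_big /= -[RHS]Hs; apply eq_bigr => r _.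
by rewrite -mulr_sumr H1 mulr1.
Qed.

Lemma dotv1 (R : realFieldType) Q K (pi : 'I_Q -> R) (p : 'I_Q -> 'I_Q -> 'I_K -> R) q :
  model_params pi p -> dotp (vv pi p q) (fun _ => 1) = 1.
Proof.
move=> Hm; rewrite -[RHS](sum_v q Hm); apply eq_bigr => k _; exact: mulr1.
Qed.

Lemma v_indep (R : realFieldType) Q K (pi : 'I_Q -> R) (p : 'I_Q -> 'I_Q -> 'I_K -> R) :
  model_params pi p -> lin_indep_pql p ->
  forall c : 'I_Q -> R, (forall k, \sum_q c q * vv pi p q k = 0) -> forall q, c q = 0.
Proof.
move=> Hm Hli c Hc q0.
case: (Hm) => Hpos _ _ _ Hsym.
pose C q l := c q * pi l + (if (q < l)%N then c l * pi q else 0).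
have HC : forall k : 'I_K, \sum_(q : 'I_Q) \sum_(l : 'I_Q | (q <= l)%N) C q l * p q l k = 0.
  move=> k; rewrite -[RHS](Hc k).
  have E1 : \sum_q c q * vv pi p q k = \sum_(q : 'I_Q) \sum_(r : 'I_Q)
      ((if (q <= r)%N then c q * pi r * p q r k else 0) + (if (r < q)%N then c q * pi r * p q r k else 0)).
    apply eq_bigr => q _; rewrite /vv mulr_sumr; apply eq_bigr => r _.
    by case: leqP => _; rewrite ?addr0 ?add0r mulrA.
  have E2 : \sum_(q : 'I_Q) \sum_(l : 'I_Q | (q <= l)%N) C q l * p q l k = \sum_(q : 'I_Q) \sum_(l : 'I_Q)
      ((if (q <= l)%N then c q * pi l * p q l k else 0) + (if (q < l)%N then c l * pi q * p q l k else 0)).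
    apply eq_bigr => q _; rewrite big_mkcond; apply eq_bigr => l _ /=.
    rewrite /C; case: (leqP q l) => ql.
      by case: ltnP => _; rewrite ?addr0 // mulrDl.
    by rewrite ltnNge (ltnW ql) addr0.
  rewrite E1 E2; under eq_bigr do rewrite big_split; under [RHS]eq_bigr do rewrite big_split.
  rewrite /= !big_split /=; congr (_ + _).
  rewrite exchange_big /=; apply eq_bigr => q _; apply eq_bigr => l _.
  by case: ifP => // _; rewrite (Hsym q l).
have := Hli C HC q0 q0 (leqnn _); rewrite /C ltnn addr0 => /eqP.
by rewrite mulf_eq0 (negbTE (lt0r_neq0 (proj1 (Hpos q0)))) orbF => /eqP.
Qed.

Definition one (R : realFieldType) (K : nat) : 'I_K -> R := fun _ => 1.

Lemma T2L (R : realFieldType) Q K (pi : 'I_Q -> R) (p : 'I_Q -> 'I_Q -> 'I_K -> R) h2 h3 :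
  model_params pi p ->
  Mst pi p (@one R K) h2 h3 (@one R K) = \sum_q pi q * (dotp (vv pi p q) h2 * dotp (vv pi p q) h3).
Proof.
move=> Hm; apply eq_bigr => q _.
under eq_bigr => l _ do rewrite (dot1 _ _ Hm) (dotv1 _ Hm) !mulr1 mulrCA.
rewrite -mulr_suml; case: Hm => _ -> _ _ _; by rewrite mul1r.
Qed.

Lemma T3L (R : realFieldType) Q K (pi : 'I_Q -> R) (p : 'I_Q -> 'I_Q -> 'I_K -> R) h1 h2 h3 :
  model_params pi p ->
  Mst pi p h1 h2 h3 (@one R K) =
  \sum_q pi q * (dotp (vv pi p q) h1 * (dotp (vv pi p q) h2 * dotp (vv pi p q) h3)).
Proof.
move=> Hm; apply eq_bigr => q _.
under eq_bigr => l _ do rewrite (dotv1 _ Hm) !mulr1.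
by rewrite -mulr_sumr -mulr_suml sum_pi_dot.
Qed.

Lemma PL (R : realFieldType) Q K (pi : 'I_Q -> R) (p : 'I_Q -> 'I_Q -> 'I_K -> R) h1 h2 h4 :
  model_params pi p ->
  Mst pi p h1 h2 (@one R K) h4 =
  \sum_q pi q * (dotp (vv pi p q) h2 * \sum_l pi l * dotp (p q l) h1 * dotp (vv pi p l) h4).
Proof.
move=> Hm; apply eq_bigr => q _.
rewrite !mulr_sumr; apply eq_bigr => l _; rewrite (dotv1 _ Hm) mul1r; congr (_ * _).
by rewrite mulrCA.
Qed.
Lemma dual_ex (R : fieldType) (Q K : nat) (w : 'I_Q -> 'I_K -> R) :
 (forall c : 'I_Q -> R, (forall k, \sum_q c q * w q k = 0) -> forall q, c q = 0) ->
 exists u : 'I_Q -> 'I_K -> R, forall q r, \sum_k w q k * u r k = (q == r)%:R.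
Proof.
move=> Hind; set A := \matrix_(q, k) w q k.
have : row_free A.
  rewrite -kermx_eq0; apply/eqP/row_matrixP => i; rewrite row0.
  set Kr := row i (kermx A).
  have HK : Kr *m A = 0 by rewrite /Kr -row_mul mulmx_ker row0.
  apply/rowP => j; have := Hind (fun q => Kr 0 q) _ j; rewrite !mxE; apply => k.
  move/rowP: HK => /(_ k); rewrite !mxE => HK; rewrite -[RHS]HK; apply eq_bigr => q _; by rewrite !mxE.
case/row_freeP => B HB; exists (fun r k => B k r) => q r.
move/matrixP: HB => /(_ q r); rewrite !mxE => <-; apply eq_bigr => k _; by rewrite mxE.
Qed.

Lemma dot_e (R : realFieldType) K (f : 'I_K -> R) k : dotp f (fun j => (j == k)%:R) = f k.
Proof. exact: sum_del. Qed.

Lemma Pcol (R : realFieldType) Q K (pi : 'I_Q -> R) (p : 'I_Q -> 'I_Q -> 'I_K -> R)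
   (w : 'I_Q -> 'I_K -> R) h1 h2 h4 (a b : 'I_Q) :
  dotp (w a) h2 = 1 -> (forall q, q != a -> dotp (w q) h2 = 0) ->
  dotp (w b) h4 = 1 -> (forall q, q != b -> dotp (w q) h4 = 0) ->
  \sum_q pi q * (dotp (w q) h2 * \sum_l pi l * dotp (p q l) h1 * dotp (w l) h4)
  = pi a * (pi b * dotp (p a b) h1).
Proof.
move=> A1 A0 B1 B0.
rewrite (@sum_only _ _ _ a) => [|q qa]; last by rewrite A0 // mul0r mulr0.
rewrite A1 mul1r (@sum_only _ _ _ b) => [|l lb]; last by rewrite B0 // mulr0.
by rewrite B1 mulr1.
Qed.

Lemma identify (R : realFieldType) Q K (pi pi' : 'I_Q -> R) (p p' : 'I_Q -> 'I_Q -> 'I_K -> R) :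
  model_params pi p -> model_params pi' p' ->
  (forall c : 'I_Q -> R, (forall k, \sum_q c q * vv pi p q k = 0) -> forall q, c q = 0) ->
  (forall c : 'I_Q -> R, (forall k, \sum_q c q * vv pi' p' q k = 0) -> forall q, c q = 0) ->
  (forall h1 h2 h3 h4, Mst pi p h1 h2 h3 h4 = Mst pi' p' h1 h2 h3 h4) ->
  exists s : {perm 'I_Q},
    (forall q, pi' q = pi (s q)) /\ (forall q l k, p' q l k = p (s q) (s l) k).
Proof.
move=> Hm Hm' Hi Hi' HM.
have [u Du] := dual_ex Hi.
have [u' Du'] := dual_ex Hi'.
have {}Du : forall q r, dotp (vv pi p q) (u r) = (q == r)%:R by exact: Du.
have {}Du' : forall q r, dotp (vv pi' p' q) (u' r) = (q == r)%:R by exact: Du'.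
have pos : forall q, pi q != 0 by case: Hm => H _ _ _ _ q; exact: lt0r_neq0 (proj1 (H q)).
have pos' : forall q, pi' q != 0 by case: Hm' => H _ _ _ _ q; exact: lt0r_neq0 (proj1 (H q)).
have T2 : forall h2 h3, \sum_q pi q * (dotp (vv pi p q) h2 * dotp (vv pi p q) h3)
    = \sum_q pi' q * (dotp (vv pi' p' q) h2 * dotp (vv pi' p' q) h3).
  by move=> h2 h3; rewrite -(T2L _ _ Hm) -(T2L _ _ Hm').
have T3 : forall h1 h2 h3,
    \sum_q pi q * (dotp (vv pi p q) h1 * (dotp (vv pi p q) h2 * dotp (vv pi p q) h3))
  = \sum_q pi' q * (dotp (vv pi' p' q) h1 * (dotp (vv pi' p' q) h2 * dotp (vv pi' p' q) h3)).
  by move=> h1 h2 h3; rewrite -(T3L _ _ _ Hm) -(T3L _ _ _ Hm').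
have S1 : forall t h, pi' t * dotp (vv pi' p' t) h
    = \sum_q pi q * (dotp (vv pi p q) h * dotp (vv pi p q) (u' t)).
  move=> t h; rewrite T2 (@sum_only _ _ _ t) ?Du' ?eqxx ?mulr1 // => s /negbTE st.
  by rewrite Du' st !mulr0.
pose be t a := dotp (vv pi' p' t) (u a).
have S2 : forall t k, vv pi' p' t k = \sum_a be t a * vv pi p a k.
  move=> t k; apply: (mulfI (pos' t)).
  have E1 : pi' t * vv pi' p' t k = \sum_q pi q * (vv pi p q k * dotp (vv pi p q) (u' t)).
    rewrite -(dot_e (vv pi' p' t) k) S1; apply eq_bigr => q _; by rewrite dot_e.
  have E2 : forall a, pi' t * be t a = pi a * dotp (vv pi p a) (u' t).
    move=> a; rewrite /be S1 (@sum_only _ _ _ a) ?Du ?eqxx ?mul1r // => q /negbTE qa.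
    by rewrite Du qa mul0r mulr0.
  rewrite E1 mulr_sumr; apply eq_bigr => q _.
  by rewrite [RHS]mulrA E2 mulrCA [RHS]mulrC.
have S3 : forall t a b, a != b -> be t a * be t b = 0.
  move=> t a b ab; have := T3 (u' t) (u a) (u b).
  rewrite big1 => [|q _]; last first.
    rewrite !Du; case: eqP => [->|_]; last by rewrite mul0r !mulr0.
    case: eqP => [Eab|_]; last by rewrite !mulr0.
    by rewrite Eab eqxx in ab.
  rewrite (@sum_only _ _ _ t) ?Du' ?eqxx ?mul1r; last first.
    by move=> s /negbTE st; rewrite Du' st mul0r mulr0.
  move/esym/eqP; rewrite mulf_eq0 (negbTE (pos' t)) /= => /eqP.
  done.
have Sv1 : forall t, \sum_k vv pi' p' t k = 1 by move=> t; exact: sum_v.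
pose sig t := if [pick a | be t a != 0] is Some a then a else t.
have Hsig : forall t, be t (sig t) != 0.
  move=> t; rewrite /sig; case: pickP => [a //|Hn].
  have : \sum_k vv pi' p' t k = 0.
    apply big1 => k _; rewrite S2 big1 // => a _.
    by move/negbT: (Hn a); rewrite negbK => /eqP ->; rewrite mul0r.
  by rewrite Sv1 => /eqP; rewrite oner_eq0.
have Hb0 : forall t a, a != sig t -> be t a = 0.
  move=> t a an; have /eqP := S3 t a (sig t) an.
  by rewrite mulf_eq0 (negbTE (Hsig t)) orbF => /eqP.
have Hv : forall t k, vv pi' p' t k = vv pi p (sig t) k.
  move=> t.
  have Hv0 : forall k, vv pi' p' t k = be t (sig t) * vv pi p (sig t) k.
    move=> k; rewrite S2 (@sum_only _ _ _ (sig t)) // => a /Hb0 ->; by rewrite mul0r.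
  have Hb1 : be t (sig t) = 1.
    have := Sv1 t; under eq_bigr do rewrite Hv0.
    by rewrite -mulr_sumr (sum_v _ Hm) mulr1.
  by move=> k; rewrite Hv0 Hb1 mul1r.
have Hdv : forall t h, dotp (vv pi' p' t) h = dotp (vv pi p (sig t)) h.
  by move=> t h; apply eq_bigr => k _; rewrite Hv.
have sig_inj : injective sig.
  move=> t1 t2 E; have := Du' t1 t1; rewrite Hdv E -Hdv Du' eqxx.
  case: eqP => [->//|_]; rewrite /= mulr0n mulr1n => /eqP.
  by rewrite eq_sym oner_eq0.
pose s := perm sig_inj.
have sE : forall t, s t = sig t by move=> t; rewrite permE.
have Hpi : forall t, pi' t = pi (s t).
  move=> t; have := S1 t (u (sig t)).
  rewrite Hdv Du eqxx mulr1 (@sum_only _ _ _ (sig t)); last first.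
    by move=> q /negbTE qs; rewrite Du qs mul0r mulr0.
  by rewrite Du eqxx mul1r -Hdv Du' eqxx mulr1 sE.
have Hvu' : forall q a, dotp (vv pi p q) (u' a) = (q == s a)%:R.
  move=> q a; rewrite -(permKV s q) (inj_eq perm_inj) sE -Hdv Du'.
  done.
exists s; split => // a b k.
have := PL (fun j => (j == k)%:R) (u' a) (u' b) Hm.
rewrite HM (PL _ _ _ Hm').
rewrite (@Pcol _ _ _ pi' p' (vv pi' p') _ (u' a) (u' b) a b); first last.
- by move=> q qb; rewrite Du' (negbTE qb).
- by rewrite Du' eqxx.
- by move=> q qa; rewrite Du' (negbTE qa).
- by rewrite Du' eqxx.
rewrite (@Pcol _ _ _ pi p (vv pi p) _ (u' a) (u' b) (s a) (s b)); first last.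
- by move=> q qb; rewrite Hvu' (negbTE qb).
- by rewrite Hvu' eqxx.
- by move=> q qa; rewrite Hvu' (negbTE qa).
- by rewrite Hvu' eqxx.
rewrite !dot_e !Hpi => E.
apply: (mulfI (pos (s a))); apply: (mulfI (pos (s b))).
rewrite !mulrA (mulrC (pi (s b))) -!mulrA.
done.
Qed.

Unset Implicit Arguments.
Set Strict Implicit.

Theorem theorem7 (R : realFieldType) (Q kappa : nat)
    (pi pi' : 'I_Q -> R) (p p' : 'I_Q -> 'I_Q -> 'I_kappa -> R) :
  (2 <= Q)%N ->
  ('C(Q.+1, 2) <= kappa)%N ->
  model_params pi p -> lin_indep_pql p ->
  model_params pi' p' -> lin_indep_pql p' ->
  (forall x : 'I_9 -> 'I_9 -> 'I_kappa,
      @joint_dist R Q kappa 9%N pi p x = @joint_dist R Q kappa 9%N pi' p' x) ->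
  exists s : {perm 'I_Q},
    (forall q, pi' q = pi (s q)) /\
    (forall q l, p' q l = p (s q) (s l)).
Proof.
move=> HQ Hk Hm Hli Hm' Hli' Hjd.
have kpos : (0 < kappa)%N.
  by apply: leq_trans Hk; rewrite bin_gt0 ltnS (leq_trans _ HQ).
pose k0 : 'I_kappa := Ordinal kpos.
have HM : forall h1 h2 h3 h4, Mst pi p h1 h2 h3 h4 = Mst pi' p' h1 h2 h3 h4.
  move=> h1 h2 h3 h4.
  rewrite -(@master _ _ _ pi p k0 h1 h2 h3 h4 Hm) -(@master _ _ _ pi' p' k0 h1 h2 h3 h4 Hm').
  by apply eq_bigr => y _; rewrite Hjd.
have [s [H1 H2]] := identify Hm Hm' (v_indep Hm Hli) (v_indep Hm' Hli') HM.
exists s; split => // q l; apply: functional_extensionality => k; exact: H2.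
Qed.
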